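(* Let $q=2^f$ with $f\ge4$, let $q_0<q$ be a power of $2$ with $\gcd(q-1,q_0^2-1)=1$, and let $u\in\mathscr{U}_{q,q_0}$. The only automorphism of $\Gamma_u$ that fixes every vertex of $\{\varepsilon\}\cup\Omega_\infty$ is the identity.
   Context: For $a,c\in\mathbb{F}_q$ let $\Phi_{a,c}=\begin{bmatrix}1&0&0\\ a&1&0\\ c&a^{q_0}&1\end{bmatrix}$, $K=\{\Phi_{a,c}: a,c\in\mathbb{F}_q\}\le GL(3,\mathbb{F}_q)$ with identity $\varepsilon=\Phi_{0,0}$; $\Omega_\infty=\{\Phi_{0,c}:c\in\mathbb{F}_q^*\}$ and for $v\in\mathbb{F}_q$, $\Omega_v=\{\Phi_{a,va^{q_0+1}}: a\in\mathbb{F}_q^*\}$. $\Gamma_u=\mathrm{Cay}(K,\Omega_u\cup\Omega_{u+1})$ is the graph with vertex set $K$, $x,y$ adjacent iff $xy^{-1}\in\Omega_u\cup\Omega_{u+1}$. $\mathscr{U}_{q,q_0}$ is the set of $u\in\mathbb{F}_q$ such that (U1) $u=(1+\eta^{q_0})/(\eta+\eta^{q_0})$ for some primitive element $\eta$ of $\mathbb{F}_q$, and (U2) $X^{q_0+1}+uX^{q_0}+(u+1)X+1$ has no roots in $\mathbb{F}_q$. *)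

(* Defs.v *)
From HB Require Import structures.
From mathcomp Require Import all_boot all_order all_fingroup all_algebra all_field.
Set Implicit Arguments. Unset Strict Implicit. Unset Printing Implicit Defensive.
Import GRing.Theory.
Local Open Scope ring_scope.

Section Suzuki.
Variables (F : finFieldType) (q0 : nat).

Definition Phi (a c : F) : 'M[F]_3 :=
  \matrix_(i < 3, j < 3)
    (if (i == j :> nat) then 1
     else if (i == 1%N :> nat) && (j == 0%N :> nat) then a
     else if (i == 2%N :> nat) && (j == 0%N :> nat) then c
     else if (i == 2%N :> nat) && (j == 1%N :> nat) then a ^+ q0
     else 0).

Definition Kset : {set 'M[F]_3} := [set Phi p.1 p.2 | p : F * F].

Definition eps : 'M[F]_3 := Phi 0 0.

Definition Omega_inf : {set 'M[F]_3} := [set Phi 0 c | c in [set c : F | c != 0]].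

Definition Omega (v : F) : {set 'M[F]_3} :=
  [set Phi a (v * a ^+ q0.+1) | a in [set a : F | a != 0]].

Definition Kvert := {x : 'M[F]_3 | x \in Kset}.

(* adjacency in Cay(K, Omega_u U Omega_{u+1}): x y^{-1} in the connection set *)
Definition Gadj (u : F) (x y : Kvert) : bool :=
  (val x *m invmx (val y)) \in (Omega u :|: Omega (u + 1)).

Definition is_graph_aut (u : F) (g : {perm Kvert}) : Prop :=
  forall x y : Kvert, Gadj u (g x) (g y) = Gadj u x y.

Definition inU (u : F) : Prop :=
  (exists eta : F, (#|F|.-1).-primitive_root eta /\
     u = (1 + eta ^+ q0) / (eta + eta ^+ q0)) /\
  (forall x : F, ~~ root (('X : {poly F}) ^+ q0.+1 + u *: 'X ^+ q0 + (u + 1) *: 'X + 1) x).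

End Suzuki.

(* Main.v *)
Require Import Defs.
From HB Require Import structures.
From mathcomp Require Import all_boot all_order all_fingroup all_algebra all_field.
From mathcomp Require Import ring zify.
Import GRing.Theory.
Local Open Scope ring_scope.

Lemma frob (F : finFieldType) (h : 1 + 1 = 0 :> F) e (a b : F) :
  (a + b) ^+ (2 ^ e) = a ^+ (2 ^ e) + b ^+ (2 ^ e).
Proof.
elim: e => [|e IH]; first by rewrite !expn0 !expr1.
by rewrite expnS mulnC !exprM IH; ring: h.
Qed.

Lemma mulPhi (F : finFieldType) (h : 1 + 1 = 0 :> F) e (a b c d : F) :
  Phi (2 ^ e) a c *m Phi (2 ^ e) b d = Phi (2 ^ e) (a + b) (c + d + a ^+ (2 ^ e) * b).
Proof.
apply/matrixP => i j; rewrite !mxE !big_ord_recr big_ord0 /= !mxE /=.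
case: i => [[|[|[|?]]] ?]; case: j => [[|[|[|?]]] ?] //=; rewrite ?frob //; ring: h.
Qed.

Lemma Phi00 (F : finFieldType) e : Phi (2 ^ e) (0 : F) 0 = 1%:M.
Proof.
apply/matrixP => i j; rewrite !mxE expr0n expn_eq0 /=.
by case: i => [[|[|[|?]]] ?]; case: j => [[|[|[|?]]] ?].
Qed.

Lemma invPhi (F : finFieldType) (h : 1 + 1 = 0 :> F) e (a c : F) :
  invmx (Phi (2 ^ e) a c) = Phi (2 ^ e) a (c + a ^+ (2 ^ e).+1).
Proof.
have E : Phi (2 ^ e) a c *m Phi (2 ^ e) a (c + a ^+ (2 ^ e).+1) = 1%:M.
  rewrite mulPhi // -(Phi00 F e); congr Phi; rewrite ?exprS; ring: h.
have [U _] := mulmx1_unit E.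
by rewrite -[RHS](mulKmx U) E mulmx1.
Qed.

Lemma Phi_inj (F : finFieldType) q0 (a b c d : F) :
  Phi q0 a c = Phi q0 b d -> a = b /\ c = d.
Proof.
move=> E; split.
  by have := congr1 (fun M : 'M_3 => M (@Ordinal 3 1 isT) (@Ordinal 3 0 isT)) E; rewrite !mxE.
by have := congr1 (fun M : 'M_3 => M (@Ordinal 3 2 isT) (@Ordinal 3 0 isT)) E; rewrite !mxE.
Qed.

Lemma memOmega (F : finFieldType) q0 (v a c : F) :
  (Phi q0 a c \in Omega q0 v) = (a != 0) && (c == v * a ^+ q0.+1).
Proof.
apply/imsetP/andP => [[a' Ha' /Phi_inj [-> ->]]|[Ha /eqP ->]].
  by rewrite inE in Ha'.
by exists a; rewrite ?inE.
Qed.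

Lemma memOinf (F : finFieldType) q0 (a c : F) :
  (Phi q0 a c \in Omega_inf F q0) = (a == 0) && (c != 0).
Proof.
apply/imsetP/andP => [[c' Hc' /Phi_inj [-> ->]]|[/eqP -> Hc]].
  by rewrite inE in Hc'.
by exists c; rewrite ?inE.
Qed.

Lemma PhiK (F : finFieldType) q0 (a c : F) : Phi q0 a c \in Kset F q0.
Proof. by apply/imsetP; exists (a, c). Qed.

Definition mkV (F : finFieldType) q0 (a c : F) : Kvert F q0 :=
  @exist _ (fun M => M \in Kset F q0) (Phi q0 a c) (PhiK F q0 a c).

Lemma vdec (F : finFieldType) q0 (x : Kvert F q0) : exists a c, val x = Phi q0 a c.
Proof. by case: x => M /= /imsetP [[a c] _ ->]; exists a, c. Qed.

Lemma GadjE (F : finFieldType) (h : 1 + 1 = 0 :> F) e (u : F) (x y : Kvert F (2 ^ e)) a c b d :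
  val x = Phi (2 ^ e) a c -> val y = Phi (2 ^ e) b d ->
  Gadj u x y = (a + b != 0) &&
    ((c + (d + b ^+ (2 ^ e).+1) + a ^+ (2 ^ e) * b == u * (a + b) ^+ (2 ^ e).+1) ||
     (c + (d + b ^+ (2 ^ e).+1) + a ^+ (2 ^ e) * b == (u + 1) * (a + b) ^+ (2 ^ e).+1)).
Proof.
move=> hx hy; rewrite /Gadj hx hy invPhi // mulPhi // in_setU !memOmega.
by case: (a + b != 0).
Qed.

Lemma GadjE0 (F : finFieldType) (h : 1 + 1 = 0 :> F) e (u : F) (x : Kvert F (2 ^ e)) a c d :
  val x = Phi (2 ^ e) a c ->
  Gadj u x (mkV F (2 ^ e) 0 d) = (a != 0) &&
    ((c + d == u * a ^+ (2 ^ e).+1) || (c + d == (u + 1) * a ^+ (2 ^ e).+1)).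
Proof.
move=> hx; rewrite (@GadjE F h e u x (mkV F (2 ^ e) 0 d) a c 0 d hx (erefl _)) addr0 expr0n /= mulr0 !addr0.
by [].
Qed.

Lemma powinj (F : finFieldType) N (x y : F) : (0 < #|F|.-1)%N ->
  coprime #|F|.-1 N -> x != 0 -> y != 0 -> x ^+ N = y ^+ N -> x = y.
Proof.
move=> m0 cop x0 y0 E.
set z := x / y.
have z0 : z != 0 by rewrite mulf_neq0 ?invr_eq0.
have zN : z ^+ N = 1 by rewrite /z exprMn exprVn E mulfV // expf_neq0.
have zm : z ^+ #|F|.-1 = 1.
  have cF : (0 < #|F|)%N := leq_trans m0 (leq_pred _).
  have := expf_card z; rewrite -(prednK cF) exprS => H.
  by apply: (mulfI z0); rewrite H mulr1.
have [k _ dv] := Bezoutl N m0.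
rewrite (eqP cop) in dv.
have [j hj] := dvdnP dv.
have z1 : z = 1.
  have : z ^+ (1 + k * N)%N = 1 by rewrite hj mulnC exprM zm expr1n.
  by rewrite exprD expr1 mulnC exprM zN expr1n mulr1.
by apply: (divIf y0); rewrite -/z z1 divff.
Qed.

Lemma sqpred n : (0 < n)%N -> ((n ^ 2).-1 = n.+1 * n.-1)%N.
Proof. case: n => // n _; rewrite /=; nia. Qed.

Lemma qinj (F : finFieldType) e (m0 : (0 < #|F|.-1)%N)
  (cop : coprime #|F|.-1 ((2 ^ e) ^ 2).-1) (x y : F) :
  x ^+ (2 ^ e).+1 = y ^+ (2 ^ e).+1 -> x = y.
Proof.
have [->|x0] := eqVneq x 0.
  by move/esym/eqP; rewrite expr0n /= expf_eq0 /= => /eqP.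
have [->|y0] := eqVneq y 0.
  by move/eqP; rewrite expr0n /= expf_eq0 /= (negPf x0).
move=> E; apply: (@powinj F _ x y m0 cop x0 y0).
by rewrite sqpred ?expn_gt0 // exprM E -exprM.
Qed.

Lemma q1inj (F : finFieldType) e (m0 : (0 < #|F|.-1)%N)
  (cop : coprime #|F|.-1 ((2 ^ e) ^ 2).-1) (a b : F) :
  a != 0 -> b != 0 -> a ^+ (2 ^ e) * b = a * b ^+ (2 ^ e) -> a = b.
Proof.
move=> a0 b0 E.
have q0 : (0 < 2 ^ e)%N by rewrite expn_gt0.
move: E cop; rewrite -(prednK q0) sqpred //=.
set n := (2 ^ e).-1 => E cop.
have En : a ^+ n = b ^+ n.
  apply: (mulfI a0); apply: (mulIf b0).
  by move: E; rewrite !exprS; move=> E; rewrite E; ring.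
apply: (@powinj F _ a b m0 cop a0 b0).
by rewrite mulnC !exprM En.
Qed.

Lemma exists_b (F : finFieldType) (a : F) : (2 < #|F|)%N -> exists b : F, (b != 0) && (b != a).
Proof.
move=> cF; case: (pickP (fun b : F => (b != 0) && (b != a))) => [b Hb|H]; first by exists b.
exfalso.
have : (#|F| <= #|[set (0 : F)%R; a]|)%N.
  rewrite -cardsT; apply: subset_leq_card; apply/subsetP => b _.
  by move: (H b) => /= /negbT; rewrite !inE negb_and !negbK.
by rewrite cards2 => H2; move: (leq_trans cF H2); case: (_ != _).
Qed.

Lemma shape (F : finFieldType) e (h : 1 + 1 = 0 :> F) (m0 : (0 < #|F|.-1)%N)
  (cop : coprime #|F|.-1 ((2 ^ e) ^ 2).-1) (u : F) (g : {perm Kvert F (2 ^ e)})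
  (Hg : is_graph_aut u g)
  (Hfix : forall d, g (mkV F (2 ^ e) 0 d) = mkV F (2 ^ e) 0 d)
  (x : Kvert F (2 ^ e)) a c :
  val x = Phi (2 ^ e) a c -> a != 0 ->
  exists2 c2, val (g x) = Phi (2 ^ e) a c2 & (c2 = c \/ c2 = c + a ^+ (2 ^ e).+1).
Proof.
move=> hx a0; have [a2 [c2 h2]] := @vdec F _ (g x).
have H1 := Hg x (mkV F (2 ^ e) 0 (c + u * a ^+ (2 ^ e).+1)).
have H2 := Hg x (mkV F (2 ^ e) 0 (c + (u + 1) * a ^+ (2 ^ e).+1)).
rewrite Hfix (@GadjE0 F h e u _ _ _ _ h2) (@GadjE0 F h e u _ _ _ _ hx) in H1.
rewrite Hfix (@GadjE0 F h e u _ _ _ _ h2) (@GadjE0 F h e u _ _ _ _ hx) in H2.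
set t := a ^+ (2 ^ e).+1 in H1 H2 *.
set t2 := a2 ^+ (2 ^ e).+1 in H1 H2.
have e1 : c + (c + u * t) == u * t by apply/eqP; ring: h.
have e2 : c + (c + (u + 1) * t) == (u + 1) * t by apply/eqP; ring: h.
rewrite e1 a0 /= in H1; rewrite e2 orbT a0 /= in H2.
have tn0 : t != 0 by rewrite expf_eq0 (negPf a0) andbF.
move/andP: H1 => [a20 /orP [/eqP E1|/eqP E1]];
move/andP: H2 => [_ /orP [/eqP E2|/eqP E2]].
- exfalso; move/eqP: tn0; apply.
  transitivity ((c2 + (c + (u + 1) * t)) + (c2 + (c + u * t))); first by ring: h.
  by rewrite E1 E2; ring: h.
- have tt : t2 = t.
    transitivity ((c2 + (c + (u + 1) * t)) + (c2 + (c + u * t))); last by ring: h.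
    by rewrite E1 E2; ring: h.
  have aa : a2 = a by apply: (@qinj F e m0 cop).
  exists c2; first by rewrite h2 aa.
  left; transitivity ((c2 + (c + u * t)) + c + u * t); first by ring: h.
  by rewrite E1 tt; ring: h.
- have tt : t2 = t.
    transitivity ((c2 + (c + (u + 1) * t)) + (c2 + (c + u * t))); last by ring: h.
    by rewrite E1 E2; ring: h.
  have aa : a2 = a by apply: (@qinj F e m0 cop).
  exists c2; first by rewrite h2 aa.
  right; transitivity ((c2 + (c + u * t)) + c + u * t); first by ring: h.
  by rewrite E1 tt; ring: h.
- exfalso; move/eqP: tn0; apply.
  transitivity ((c2 + (c + (u + 1) * t)) + (c2 + (c + u * t))); first by ring: h.
  by rewrite E1 E2; ring: h.
Qed.

Lemma c2eq (F : finFieldType) (ch : (2 \in [pchar F])%N) (X Y L R : F) :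
  (X + Y) + (L + R) = 0 -> L = R -> X = Y.
Proof.
move=> H E; rewrite E (addrr_pchar2 ch) addr0 in H.
by apply/eqP; rewrite -subr_eq0 (oppr_pchar2 ch) H.
Qed.

Theorem lemma8p2 (F : finFieldType) (f e : nat) (u : F) :
  (4 <= f)%N -> #|F| = (2 ^ f)%N ->
  (2 ^ e < 2 ^ f)%N -> coprime (2 ^ f).-1 ((2 ^ e) ^ 2).-1 ->
  inU (2 ^ e) u ->
  forall g : {perm Kvert F (2 ^ e)},
    is_graph_aut u g ->
    (forall x : Kvert F (2 ^ e),
        (val x == eps F (2 ^ e)) || (val x \in Omega_inf F (2 ^ e)) -> g x = x) ->
    g = 1%g.
Proof.
move=> f4 cF _ cop _ g Hg Hfix.
have ch : (2 \in [pchar F])%N := card_finPcharP cF (isT : prime 2).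
have h : 1 + 1 = 0 :> F by exact: (pcharf0 ch).
have hh2 : 2 = 0 :> F by [].
have hh4 : 4 = 0 :> F by rewrite -addn2 natrD hh2 addr0.
have hh6 : 6 = 0 :> F by rewrite -addn2 natrD hh4 hh2 addr0.
have hh8 : 8 = 0 :> F by rewrite -addn2 natrD hh6 hh2 addr0.
have c16 : (16 <= #|F|)%N by rewrite cF (@leq_pexp2l 2 4 f).
have m0 : (0 < #|F|.-1)%N by lia.
rewrite -cF in cop.
have Hfix' : forall d, g (mkV F (2 ^ e) 0 d) = mkV F (2 ^ e) 0 d.
  move=> d; apply: Hfix; rewrite /= memOinf eqxx /=.
  by case: (eqVneq d 0) => [->|]; [rewrite eqxx | rewrite orbT].
apply/permP => x; rewrite perm1.
have [a [c hx]] := @vdec F _ x.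
have [a0|a0] := eqVneq a 0.
  apply: Hfix; rewrite hx a0 memOinf eqxx /=.
  by case: (eqVneq c 0) => [->|]; [rewrite eqxx | rewrite orbT].
have [c2 h2 [Ec|Et]] := @shape F e h m0 cop u g Hg Hfix' x a c hx a0.
  by apply: val_inj; rewrite h2 hx Ec.
exfalso.
have [b /andP [b0 ba]] := @exists_b F a (leq_trans (isT : (2 < 16)%N) c16).
pose d := c + b ^+ (2 ^ e).+1 + a ^+ (2 ^ e) * b + u * (a + b) ^+ (2 ^ e).+1.
have hy : val (mkV F (2 ^ e) b d) = Phi (2 ^ e) b d by [].
have ab0 : a + b != 0.
  apply: contra ba => /eqP E; apply/eqP.
  by transitivity ((a + b) + a); [ring: h | rewrite E add0r].
have [d2 hd2 Ed] := @shape F e h m0 cop u g Hg Hfix' _ b d hy b0.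
have := Hg x (mkV F (2 ^ e) b d).
rewrite (@GadjE F h e u _ _ _ _ _ _ h2 hd2) (@GadjE F h e u _ _ _ _ _ _ hx hy).
have e1 : c + (d + b ^+ (2 ^ e).+1) + a ^+ (2 ^ e) * b == u * (a + b) ^+ (2 ^ e).+1.
  by apply/eqP; rewrite /d; ring: h.
rewrite e1 ab0 /= Et => /orP [] /eqP E; case: Ed => Ed; rewrite Ed /d in E;
  rewrite ?(addrK_pchar2 ch) !exprSr (frob _ h) in E.
- move/eqP: a0; apply; apply/eqP.
  have : a ^+ (2 ^ e) * a = 0 by apply: (@c2eq F ch _ _ _ _ _ E); ring: hh2 hh4 hh6 hh8.
  by move/eqP; rewrite -exprSr expf_eq0 => /andP [].
- move/eqP: ba; apply; apply: (@qinj F e m0 cop).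
  rewrite !exprSr. apply: (@c2eq F ch _ _ _ _ _ E); ring: hh2 hh4 hh6 hh8.
- have E' : a = a + b.
    apply: (@qinj F e m0 cop); rewrite !exprSr (frob _ h).
    apply: (@c2eq F ch _ _ _ _ _ E); ring: hh2 hh4 hh6 hh8.
  move/eqP: b0; apply.
  by transitivity (a + (a + b)); [ring: h | rewrite -E'; ring: h].
- move/eqP: ba; apply; apply/esym.
  apply: (@q1inj F e m0 cop) => //.
  apply: (@c2eq F ch _ _ _ _ _ E); ring: hh2 hh4 hh6 hh8.
Qed.
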